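(* Let $G=(V,E,T,c)$ and $H=(V_H,E_H,T,c_H)$ be $k$-terminal networks with the same terminal set $T$, and let $q\ge1$. Suppose $\mathcal{T}_e(G)=\mathcal{T}_e(H)$ and $$\mathrm{mincut}_G(S)\le \mathrm{mincut}_H(S)\le q\cdot \mathrm{mincut}_G(S)\qquad\text{for all } S\in\mathcal{T}_e(G).$$ Then $\mathrm{mincut}_G(S)\le \mathrm{mincut}_H(S)\le q\cdot\mathrm{mincut}_G(S)$ for every $S\subset T$ with $S\ne\emptyset,T$; that is, $H$ is a cut sparsifier of $G$ of quality $q$.
   Context: A $k$-terminal network $G=(V,E,T,c)$ is a finite connected undirected graph $(V,E)$ with edge weights (capacities) $c:E\to\mathbb{R}_{>0}$ and a set $T\subseteq V$ of $|T|=k$ terminals. For $F\subseteq E$ let $c(F)=\sum_{e\in F}c(e)$; for $W\subseteq V$ let $\delta(W)$ be the set of edges with exactly one endpoint in $W$. For $S\subset T$ with $S\neq\emptyset,T$, write $\bar S=T\setminus S$; a cut $(W,V\setminus W)$ is $S$-separating if $W\cap T\in\{S,\bar S\}$, and $\mathrm{mincut}_G(S)$ is the minimum of $c(\delta(W))$ over all $S$-separating cuts. It is assumed (e.g. by a generic perturbation of the weights) that the minimizing cutset is unique; it is denoted $E_S$ (so $E_S=E_{\bar S}$). For $F\subseteq E$, $CC(F)$ denotes the set of vertex sets of connected components of $(V,E\setminus F)$. The cutset $E_S$ is called elementary if $|CC(E_S)|=2$, and $\mathcal{T}_e(G)=\{S\subset T:\ S\neq\emptyset,T,\ |CC(E_S)|=2\}$.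 The same notions are used for $H$. *)

(* Defs.v *)
From HB Require Import structures.
From mathcomp Require Import all_boot all_order all_algebra.
Set Implicit Arguments. Unset Strict Implicit. Unset Printing Implicit Defensive.
Import Order.TTheory GRing.Theory Num.Theory.
Local Open Scope ring_scope.

(* A k-terminal network on vertex type V (finite), terminals indexed by the
   finite type K (|K| = k) via the injection t : K -> V.  The graph is encoded
   by a capacity function c : V -> V -> R: {u,v} is an edge iff 0 < c u v,
   in which case c u v is its capacity. *)

Section Network.
Variables (R : realFieldType) (K V : finType) (c : V -> V -> R) (t : K -> V).

Definition edge_rel : rel V := fun u v => 0 < c u v.

Definition is_network : Prop :=
  [/\ forall u v, c u v = c v u,
      forall u v, 0 <= c u v,
      forall u v, connect edge_rel u v
    & injective t].

(* delta(W): edges (as ordered pairs, both orientations) with exactly one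
   endpoint in W *)
Definition delta (W : {set V}) : {set V * V} :=
  [set p | (0 < c p.1 p.2) && ((p.1 \in W) != (p.2 \in W))].

(* c(delta(W)) : each undirected edge counted once *)
Definition cutval (W : {set V}) : R :=
  \sum_(u in W) \sum_(v in ~: W) c u v.

Definition termset (W : {set V}) : {set K} := [set k | t k \in W].

Definition separating (S : {set K}) (W : {set V}) : bool :=
  (termset W == S) || (termset W == ~: S).

(* mincut(S): minimum of cutval over S-separating cuts (the candidate
   t @: S is S-separating since t is injective) *)
Definition mincut (S : {set K}) : R :=
  cutval (Order.arg_min (t @: S) (separating S) cutval).

Definition rem_rel (F : {set V * V}) : rel V :=
  fun u v => edge_rel u v && ((u, v) \notin F) && ((v, u) \notin F).

Definition CC (F : {set V * V}) : {set {set V}} :=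
  [set [set y | connect (rem_rel F) x y] | x : V].

Definition unique_mincuts : Prop :=
  forall S : {set K}, S != set0 -> S != setT ->
  forall W W' : {set V}, separating S W -> separating S W' ->
  cutval W = mincut S -> cutval W' = mincut S -> delta W = delta W'.

(* S in T_e: the (unique) minimum cutset E_S is elementary *)
Definition elementary (S : {set K}) : bool :=
  [&& S != set0, S != setT &
   [exists W : {set V}, [&& separating S W, cutval W == mincut S &
                           #|CC (delta W)| == 2%N]]].

End Network.

(* Main.v *)
Require Import Defs.
From HB Require Import structures.
From mathcomp Require Import all_boot all_order all_algebra.
From mathcomp Require Import lra zify.
Import Order.TTheory GRing.Theory Num.Theory.
Local Open Scope ring_scope.
Set Implicit Arguments. Unset Strict Implicit. Unset Printing Implicit Defensive.

Definition sd (T : finType) (A B : {set T}) : {set T} := (A :\: B) :|: (B :\: A).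

Lemma in_sd (T : finType) (A B : {set T}) x : (x \in sd A B) = ((x \in A) != (x \in B)).
Proof. by rewrite !inE; case: (x \in A); case: (x \in B). Qed.

Lemma in_termset (K V : finType) (t : K -> V) (W : {set V}) k :
  (k \in termset t W) = (t k \in W).
Proof. by rewrite inE. Qed.

Definition Dv (R : realFieldType) (V : finType) (c : V -> V -> R) (A : {set V}) : R :=
  \sum_u \sum_v (if (u \in A) != (v \in A) then c u v else 0).

Lemma cutvalE (R : realFieldType) (V : finType) (c : V -> V -> R) A :
  cutval c A = \sum_u \sum_v (if (u \in A) && (v \notin A) then c u v else 0).
Proof.
rewrite /cutval big_mkcond /=; apply: eq_bigr => u _.
case: (u \in A) => /=.
  by rewrite big_mkcond; apply: eq_bigr => v _; rewrite inE.
by rewrite big1.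
Qed.

Lemma cutvalE' (R : realFieldType) (V : finType) (c : V -> V -> R) A :
  (forall u v, c u v = c v u) ->
  cutval c A = \sum_u \sum_v (if (u \notin A) && (v \in A) then c u v else 0).
Proof.
move=> hs; rewrite cutvalE exchange_big /=; apply: eq_bigr => u _; apply: eq_bigr => v _.
by rewrite (hs v u); case: (u \in A); case: (v \in A).
Qed.

Lemma Dv2 (R : realFieldType) (V : finType) (c : V -> V -> R) A :
  (forall u v, c u v = c v u) -> Dv c A = cutval c A + cutval c A.
Proof.
move=> hs; rewrite {1}cutvalE (cutvalE' _ hs) -big_split; apply: eq_bigr => u _.
rewrite -big_split; apply: eq_bigr => v _ /=.
by case: (u \in A); case: (v \in A); rewrite /= ?addr0 ?add0r.
Qed.

Lemma Dv_sd_le (R : realFieldType) (V : finType) (c : V -> V -> R) A B :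
  (forall u v, 0 <= c u v) -> Dv c (sd A B) <= Dv c A + Dv c B.
Proof.
move=> hp; rewrite /Dv -big_split ler_sum // => u _; rewrite -big_split ler_sum // => v _ /=.
have := hp u v; rewrite !in_sd.
by case: (u \in A); case: (v \in A); case: (u \in B); case: (v \in B) => /= h; lra.
Qed.

Lemma Dv_sd_eq (R : realFieldType) (V : finType) (c : V -> V -> R) (W C : {set V}) :
  (forall u v, 0 <= c u v) ->
  (forall u v, 0 < c u v -> (u \in C) != (v \in C) -> (u \in W) != (v \in W)) ->
  Dv c W = Dv c C + Dv c (sd W C).
Proof.
move=> hp h; rewrite /Dv -big_split; apply: eq_bigr => u _.
rewrite -big_split; apply: eq_bigr => v _ /=; rewrite !in_sd.
have := hp u v; rewrite le_eqVlt => /orP [/eqP <-|cp].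
  by rewrite !if_same addr0.
move: (h u v cp).
by case: (u \in W); case: (v \in W); case: (u \in C); case: (v \in C) => /= hh;
  rewrite ?addr0 ?add0r //; have := hh isT.
Qed.

Lemma cutval_sd_le (R : realFieldType) (V : finType) (c : V -> V -> R) A B :
  (forall u v, c u v = c v u) -> (forall u v, 0 <= c u v) ->
  cutval c (sd A B) <= cutval c A + cutval c B.
Proof.
move=> hs hp; have := Dv_sd_le A B hp; rewrite !Dv2 //; lra.
Qed.

Lemma cutval_sd_eq (R : realFieldType) (V : finType) (c : V -> V -> R) (W C : {set V}) :
  (forall u v, c u v = c v u) -> (forall u v, 0 <= c u v) ->
  (forall u v, 0 < c u v -> (u \in C) != (v \in C) -> (u \in W) != (v \in W)) ->
  cutval c W = cutval c C + cutval c (sd W C).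
Proof.
move=> hs hp h; have := Dv_sd_eq hp h; rewrite !Dv2 //; lra.
Qed.

Lemma delta_card (R : realFieldType) (V : finType) (c : V -> V -> R) (W C : {set V}) :
  (forall u v, 0 < c u v -> (u \in C) != (v \in C) -> (u \in W) != (v \in W)) ->
  #|delta c W| = (#|delta c C| + #|delta c (sd W C)|)%N.
Proof.
move=> h.
have sub : delta c C \subset delta c W.
  apply/subsetP => -[u v]; rewrite !inE /= => /andP [cp hc]; by rewrite cp (h u v cp hc).
have -> : delta c (sd W C) = delta c W :\: delta c C.
  apply/setP => -[u v]; rewrite !inE /= ?in_sd.
  case cp: (0 < c u v) => //=; move: (h u v cp).
  by case: (u \in W); case: (v \in W); case: (u \in C); case: (v \in C) => //= /(_ isT).
by rewrite -(cardsID (delta c C) (delta c W)) (setIidPr sub).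
Qed.

Lemma sum_ge_term (R : realFieldType) (I : finType) (F : I -> R) i0 :
  (forall i, 0 <= F i) -> F i0 <= \sum_i F i.
Proof.
move=> h; rewrite (bigD1 i0) //= lerDl; apply: sumr_ge0 => i _; exact: h.
Qed.

Lemma cross_edge (R : realFieldType) (V : finType) (c : V -> V -> R) (A : {set V}) u v :
  (forall u v, c u v = c v u) -> (forall u v, connect (edge_rel c) u v) ->
  u \in A -> v \notin A -> exists x y, [/\ 0 < c x y, x \in A & y \notin A].
Proof.
move=> hs hc uA vA.
case: (pickP (fun p : V * V => [&& 0 < c p.1 p.2, p.1 \in A & p.2 \notin A])) =>
  [[x y] /= /and3P [cp xA yA]|hno]; first by exists x, y.
exfalso.
have cl : closed (edge_rel c) A.
  move=> x y; rewrite /edge_rel => cp.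
  case xA: (x \in A); case yA: (y \in A) => //.
    by have := hno (x, y); rewrite /= cp xA yA.
  by have := hno (y, x); rewrite /= hs cp xA yA.
have := closed_connect cl (hc u v); by rewrite uA (negbTE vA).
Qed.

Lemma delta_gt0 (R : realFieldType) (V : finType) (c : V -> V -> R) (A : {set V}) u v :
  (forall u v, c u v = c v u) -> (forall u v, connect (edge_rel c) u v) ->
  u \in A -> v \notin A -> (0 < #|delta c A|)%N.
Proof.
move=> hs hc uA vA; have [x [y [cp xA yA]]] := cross_edge hs hc uA vA.
apply/card_gt0P; exists (x, y); by rewrite inE /= cp xA yA.
Qed.

Lemma cutval_gt0 (R : realFieldType) (V : finType) (c : V -> V -> R) (A : {set V}) u v :
  (forall u v, c u v = c v u) -> (forall u v, 0 <= c u v) ->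
  (forall u v, connect (edge_rel c) u v) ->
  u \in A -> v \notin A -> 0 < cutval c A.
Proof.
move=> hs hp hc uA vA; have [x [y [cp xA yA]]] := cross_edge hs hc uA vA.
have tnn : forall a b, 0 <= (if (a \in A) != (b \in A) then c a b else 0).
  by move=> a b; case: ifP.
have h1 := @sum_ge_term _ _ (fun a => \sum_b (if (a \in A) != (b \in A) then c a b else 0)) x
  (fun a => sumr_ge0 _ (fun b _ => tnn a b)).
have h2 := @sum_ge_term _ _ (fun b => if (x \in A) != (b \in A) then c x b else 0) y (tnn x).
move: h2; rewrite /= xA (negbTE yA) /= => h2.
rewrite {1}xA in h1.
have : c x y <= Dv c A by exact: (le_trans h2 h1).
rewrite Dv2 //; lra.
Qed.

Definition Comp (R : realFieldType) (V : finType) (c : V -> V -> R) (W : {set V}) (x : V)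
  : {set V} := [set y | connect (rem_rel c (delta c W)) x y].

Lemma in_Comp (R : realFieldType) (V : finType) (c : V -> V -> R) (W : {set V}) x y :
  (y \in Comp c W x) = connect (rem_rel c (delta c W)) x y.
Proof. by rewrite inE. Qed.

Lemma rem_sym (R : realFieldType) (V : finType) (c : V -> V -> R) (W : {set V}) :
  (forall u v, c u v = c v u) -> symmetric (rem_rel c (delta c W)).
Proof.
move=> hs u v; rewrite /rem_rel /edge_rel (hs u v).
by case: (0 < c v u); case: ((u, v) \in _); case: ((v, u) \in _).
Qed.

Lemma rem_side (R : realFieldType) (V : finType) (c : V -> V -> R) (W : {set V}) u v :
  rem_rel c (delta c W) u v -> (u \in W) = (v \in W).
Proof.
rewrite /rem_rel /edge_rel !inE /= => /andP [/andP [cp]]; rewrite cp /= negbK => /eqP h _.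
exact: h.
Qed.

Lemma comp_self (R : realFieldType) (V : finType) (c : V -> V -> R) (W : {set V}) x :
  x \in Comp c W x.
Proof. by rewrite in_Comp connect0. Qed.

Lemma comp_side (R : realFieldType) (V : finType) (c : V -> V -> R) (W : {set V}) x y :
  y \in Comp c W x -> (y \in W) = (x \in W).
Proof.
rewrite in_Comp => cxy; symmetry; apply: (closed_connect _ cxy) => u v /rem_side; exact.
Qed.

Lemma comp_cross (R : realFieldType) (V : finType) (c : V -> V -> R) (W : {set V}) x u v :
  (forall u v, c u v = c v u) ->
  0 < c u v -> (u \in Comp c W x) != (v \in Comp c W x) -> (u \in W) != (v \in W).
Proof.
move=> hs cp; apply: contraNN => /eqP eW; rewrite !in_Comp; apply/eqP.
have e : rem_rel c (delta c W) u v.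
  by rewrite /rem_rel /edge_rel !inE /= cp eW eqxx !andbF.
exact: (same_connect_r (sym_connect_sym (rem_sym W hs)) (connect1 e) x).
Qed.

Lemma comp_meet (R : realFieldType) (V : finType) (c : V -> V -> R) (W : {set V}) a b y :
  (forall u v, c u v = c v u) ->
  y \in Comp c W a -> y \in Comp c W b -> Comp c W a = Comp c W b.
Proof.
move=> hs; rewrite !in_Comp => ha hb; apply/setP => z; rewrite !in_Comp.
have sy := sym_connect_sym (rem_sym W hs).
by rewrite (same_connect sy ha) (same_connect sy hb).
Qed.

Lemma sdC1 (T : finType) (A B : {set T}) : sd (~: A) B = ~: sd A B.
Proof. by apply/setP => x; rewrite !(in_sd, inE); case: (x \in A); case: (x \in B). Qed.
Lemma sdC2 (T : finType) (A B : {set T}) : sd A (~: B) = ~: sd A B.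
Proof. by apply/setP => x; rewrite !(in_sd, inE); case: (x \in A); case: (x \in B). Qed.
Lemma sd_cancel (T : finType) (A B : {set T}) : sd B (sd A B) = A.
Proof. by apply/setP => x; rewrite !in_sd; case: (x \in A); case: (x \in B). Qed.

Lemma termset_sd (K V : finType) (t : K -> V) (A B : {set V}) :
  termset t (sd A B) = sd (termset t A) (termset t B).
Proof. by apply/setP => k; rewrite !(in_sd, in_termset). Qed.

Lemma separating_sd (K V : finType) (t : K -> V) S1 S2 (A B : {set V}) :
  separating t S1 A -> separating t S2 B -> separating t (sd S1 S2) (sd A B).
Proof.
rewrite /separating termset_sd => /orP [] /eqP -> /orP [] /eqP ->;
  by rewrite ?sdC1 ?sdC2 ?setCK eqxx ?orbT.
Qed.

Lemma sepC (K V : finType) (t : K -> V) S (W : {set V}) :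
  separating t (~: S) W = separating t S W.
Proof. by rewrite /separating setCK orbC. Qed.

Definition Wm (R : realFieldType) (K V : finType) (c : V -> V -> R) (t : K -> V) (S : {set K})
  : {set V} := Order.arg_min (t @: S) (separating t S) (cutval c).

Lemma mincutE (R : realFieldType) (K V : finType) (c : V -> V -> R) (t : K -> V) S :
  mincut c t S = cutval c (Wm c t S).
Proof. by []. Qed.

Lemma sep_i0 (K V : finType) (t : K -> V) S : injective t -> separating t S (t @: S).
Proof.
move=> hinj; rewrite /separating; apply/orP; left; apply/eqP/setP => k.
by rewrite in_termset mem_imset.
Qed.

Lemma Wm_sep (R : realFieldType) (K V : finType) (c : V -> V -> R) (t : K -> V) S :
  injective t -> separating t S (Wm c t S).
Proof. by move=> hinj; rewrite /Wm; case: (arg_minP (cutval c) (sep_i0 S hinj)). Qed.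

Lemma mincut_le (R : realFieldType) (K V : finType) (c : V -> V -> R) (t : K -> V) S W :
  injective t -> separating t S W -> mincut c t S <= cutval c W.
Proof.
move=> hinj h; rewrite mincutE /Wm.
by case: (arg_minP (cutval c) (sep_i0 S hinj)) => i _; apply.
Qed.

Lemma mincutC (R : realFieldType) (K V : finType) (c : V -> V -> R) (t : K -> V) S :
  injective t -> mincut c t (~: S) = mincut c t S.
Proof.
move=> hinj; apply/le_anti/andP; split; apply: mincut_le => //.
  by rewrite sepC; apply: Wm_sep.
by rewrite -sepC; apply: Wm_sep.
Qed.

Lemma mincut_sd (R : realFieldType) (K V : finType) (c : V -> V -> R) (t : K -> V) S S1 S2 :
  is_network c t -> (sd S1 S2 = S \/ sd S1 S2 = ~: S) ->
  mincut c t S <= mincut c t S1 + mincut c t S2.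
Proof.
move=> [hs hp hc hinj] hS.
have -> : mincut c t S = mincut c t (sd S1 S2).
  by case: hS => ->; rewrite ?mincutC.
apply: le_trans (mincut_le c hinj (separating_sd (Wm_sep c S1 hinj) (Wm_sep c S2 hinj))) _.
by rewrite !mincutE; apply: cutval_sd_le.
Qed.

Lemma proper_wit (K : finType) (S : {set K}) k1 k2 :
  k1 \in S -> k2 \notin S -> S != set0 /\ S != setT.
Proof.
move=> h1 h2; split; apply/eqP => e.
  by rewrite e inE in h1.
by rewrite e inE in h2.
Qed.

Lemma wit_proper (K : finType) (S : {set K}) :
  S != set0 -> S != setT -> exists k1 k2, k1 \in S /\ k2 \notin S.
Proof.
move=> S0 ST; case/set0Pn: S0 => k1 k1S.
case: (pickP (fun k => k \notin S)) => [k2 k2S|hno]; first by exists k1, k2.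
exfalso; move/eqP: ST; apply; apply/setP => k; rewrite inE.
by have := hno k => /= /negbFE.
Qed.

Lemma sep_wit (K V : finType) (t : K -> V) S (W : {set V}) :
  S != set0 -> S != setT -> separating t S W ->
  exists kin kout, t kin \in W /\ t kout \notin W.
Proof.
move=> S0 ST; have [k1 [k2 [h1 h2]]] := wit_proper S0 ST.
rewrite /separating => /orP [] /eqP e.
  by exists k1, k2; rewrite -!in_termset e.
by exists k2, k1; rewrite -!in_termset e !inE h1 h2.
Qed.

Lemma arith1 (R : realFieldType) (a b d e : R) : a <= e -> b = d + e -> 0 < d -> b = a -> False.
Proof. move=> *; lra. Qed.
Lemma arith2 (a b : nat) : (0 < b)%N -> (a < a + b)%N.
Proof. move=> *; lia. Qed.
Lemma arith3 (a b : nat) : (0 < a)%N -> (b < a + b)%N.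
Proof. move=> *; lia. Qed.

Lemma split_cut (R : realFieldType) (K V : finType) (c : V -> V -> R) (t : K -> V) S W :
  is_network c t -> S != set0 -> S != setT -> separating t S W ->
  cutval c W = mincut c t S -> #|CC c (delta c W)| != 2%N ->
  exists X : {set V}, [/\ termset t X != set0, termset t X != setT,
     termset t (sd W X) != set0, termset t (sd W X) != setT &
     [/\ cutval c W = cutval c X + cutval c (sd W X),
         (#|delta c X| < #|delta c W|)%N & (#|delta c (sd W X)| < #|delta c W|)%N]].
Proof.
move=> [hs hp hc hinj] S0 ST sepW cW nCC.
have [kin [kout [kinW koutW]]] := sep_wit S0 ST sepW.
have cross x := fun u v => @comp_cross R V c W x u v hs.
have Hterm : forall x, exists k, t k \in Comp c W x.
  move=> x; case: (pickP (fun k => t k \in Comp c W x)) => [k hk|hno]; first by exists k.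
  exfalso.
  have sep' : separating t S (sd W (Comp c W x)).
    move: sepW; rewrite /separating (_ : termset t (sd W _) = termset t W) //.
    apply/setP => k; rewrite !(in_termset, in_sd) hno; by case: (t k \in W).
  have h1 := mincut_le c hinj sep'.
  have h2 := cutval_sd_eq hs hp (cross x).
  have h3 : 0 < cutval c (Comp c W x).
    apply: (cutval_gt0 (u := x) (v := t kin)) => //; first exact: comp_self.
    by rewrite hno.
  exact: (arith1 h1 h2 h3 cW).
have neq : Comp c W (t kin) != Comp c W (t kout).
  apply/eqP => e; have := comp_self c W (t kout); rewrite -e => /comp_side.
  by rewrite (negbTE koutW) kinW.
have [z [za zb]] : exists z, Comp c W z != Comp c W (t kin) /\ Comp c W z != Comp c W (t kout).
  case: (pickP (fun z => (Comp c W z != Comp c W (t kin)) && (Comp c W z != Comp c W (t kout))))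
    => [z /andP [h1 h2]|hno]; first by exists z.
  exfalso; move/eqP: nCC; apply.
  have -> : CC c (delta c W) = [set Comp c W (t kin); Comp c W (t kout)].
    apply/eqP; rewrite eqEsubset; apply/andP; split.
      apply/subsetP => X /imsetP [y _ ->]; rewrite !inE.
      by move: (hno y) => /=; case: (Comp c W y == _); case: (Comp c W y == _).
    apply/subsetP => X; rewrite !inE => /orP [] /eqP ->; apply/imsetP.
      by exists (t kin).
    by exists (t kout).
  by rewrite cards2 neq.
have [ka ka_in] := Hterm z.
have [kb kb_in] := Hterm (t kin).
have [kd kd_in] := Hterm (t kout).
have kbX : t kb \notin Comp c W z.
  by apply/negP => h; move/eqP: za; apply; apply: comp_meet hs h kb_in.
have kdX : t kd \notin Comp c W z.
  by apply/negP => h; move/eqP: zb; apply; apply: comp_meet hs h kd_in.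
have kbW : t kb \in W by rewrite (comp_side kb_in).
have kdW : t kd \notin W by rewrite (comp_side kd_in).
have kbY : t kb \in sd W (Comp c W z) by rewrite in_sd kbW (negbTE kbX).
have kdY : t kd \notin sd W (Comp c W z) by rewrite in_sd (negbTE kdW) (negbTE kdX).
exists (Comp c W z).
have [P1 P2] : termset t (Comp c W z) != set0 /\ termset t (Comp c W z) != setT.
  by apply: (proper_wit (k1 := ka) (k2 := kb)); rewrite in_termset.
have [P3 P4] : termset t (sd W (Comp c W z)) != set0 /\ termset t (sd W (Comp c W z)) != setT.
  by apply: (proper_wit (k1 := kb) (k2 := kd)); rewrite in_termset.
have dc := delta_card (cross z).
have d1 := delta_gt0 hs hc ka_in kbX.
have d2 := delta_gt0 hs hc kbY kdY.
split => //; split.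
- exact: cutval_sd_eq hs hp (cross z).
- by rewrite dc; apply: arith2.
- by rewrite dc; apply: arith3.
Qed.

Lemma arith4 (R : realFieldType) (m m1 m2 w x y : R) :
  m1 <= x -> m2 <= y -> m <= m1 + m2 -> m = w -> w = x + y ->
  [/\ m = m1 + m2, x = m1 & y = m2].
Proof. move=> *; split; lra. Qed.

Lemma decomp (R : realFieldType) (K V : finType) (c : V -> V -> R) (t : K -> V)
  (P : {set K} -> Prop) :
  is_network c t -> unique_mincuts c t ->
  (forall S, elementary c t S -> P S) ->
  (forall S S1 S2, S1 != set0 -> S1 != setT -> S2 != set0 -> S2 != setT ->
     (sd S1 S2 = S \/ sd S1 S2 = ~: S) ->
     mincut c t S = mincut c t S1 + mincut c t S2 -> P S1 -> P S2 -> P S) ->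
  forall S, S != set0 -> S != setT -> P S.
Proof.
move=> hN hU hel hstep.
have [hs hp hc hinj] := hN.
suff H : forall n S, (#|delta c (Wm c t S)| < n)%N -> S != set0 -> S != setT -> P S.
  by move=> S; apply: (H #|delta c (Wm c t S)|.+1).
elim=> [//|n IH] S hn S0 ST.
case El: (elementary c t S); first exact: hel.
have sepW := Wm_sep c S hinj.
have nCC : #|CC c (delta c (Wm c t S))| != 2%N.
  apply/negP => /eqP h2; move/negbT: El => /negP; apply.
  rewrite /elementary S0 ST /=; apply/existsP; exists (Wm c t S).
  by rewrite sepW h2 -mincutE !eqxx.
have [X [X0 XT Y0 YT [cadd lt1 lt2]]] := split_cut hN S0 ST sepW (esym (mincutE c t S)) nCC.
set W := Wm c t S in sepW nCC cadd lt1 lt2 hn.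
have sepX : separating t (termset t X) X by rewrite /separating eqxx.
have sepY : separating t (termset t (sd W X)) (sd W X) by rewrite /separating eqxx.
have hsd : sd (termset t X) (termset t (sd W X)) = S \/
           sd (termset t X) (termset t (sd W X)) = ~: S.
  rewrite -termset_sd sd_cancel.
  by move: sepW; rewrite /separating => /orP [] /eqP ->; [left|right].
have [eqm eq1 eq2] := arith4 (mincut_le c hinj sepX) (mincut_le c hinj sepY)
  (mincut_sd hN hsd) (mincutE c t S) cadd.
apply: (hstep S _ _ X0 XT Y0 YT hsd eqm).
  apply: (IH _ _ X0 XT).
  have -> : delta c (Wm c t (termset t X)) = delta c X.
    exact: (hU _ X0 XT _ _ (Wm_sep c _ hinj) sepX (erefl _) eq1).
  exact: leq_trans lt1 hn.
apply: (IH _ _ Y0 YT).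
have -> : delta c (Wm c t (termset t (sd W X))) = delta c (sd W X).
  exact: (hU _ Y0 YT _ _ (Wm_sep c _ hinj) sepY (erefl _) eq2).
exact: leq_trans lt2 hn.
Qed.

Theorem theorem2p6 (R : realFieldType) (K V VH : finType)
  (c : V -> V -> R) (tG : K -> V) (cH : VH -> VH -> R) (tH : K -> VH) (q : R) :
  is_network c tG -> is_network cH tH ->
  unique_mincuts c tG -> unique_mincuts cH tH ->
  1 <= q ->
  (forall S : {set K}, elementary c tG S = elementary cH tH S) ->
  (forall S : {set K}, elementary c tG S ->
     mincut c tG S <= mincut cH tH S <= q * mincut c tG S) ->
  forall S : {set K}, S != set0 -> S != setT ->
     mincut c tG S <= mincut cH tH S <= q * mincut c tG S.
Proof.
move=> hG hH uG uH _ heqel hel.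
have up : forall S, S != set0 -> S != setT -> mincut cH tH S <= q * mincut c tG S.
  apply: (decomp (P := fun S => mincut cH tH S <= q * mincut c tG S)) hG uG _ _.
    by move=> S' /hel /andP [].
  move=> S' S1 S2 _ _ _ _ hsd heq h1 h2.
  rewrite heq mulrDr; apply: le_trans (mincut_sd hH hsd) _; exact: lerD.
have lo : forall S, S != set0 -> S != setT -> mincut c tG S <= mincut cH tH S.
  apply: (decomp (P := fun S => mincut c tG S <= mincut cH tH S)) hH uH _ _.
    by move=> S'; rewrite -heqel => /hel /andP [].
  move=> S' S1 S2 _ _ _ _ hsd heq h1 h2.
  rewrite heq; apply: le_trans (mincut_sd hG hsd) _; exact: lerD.
by move=> S S0 ST; rewrite lo ?up.
Qed.
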